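(* Let $\lambda\in\mathcal O$ be a nonzero limit ordinal and $\mathcal A,\mathcal B:\mathcal O\to\mathrm{SAT}$. Then, with $\liminf,\limsup$ computed in the lattice $\mathrm{SAT}$ of saturated sets, (a) $\limsup_{\alpha\to\lambda}(\mathcal A(\alpha)\boxplus\mathcal B(\alpha))\subseteq(\limsup_\lambda\mathcal A)\boxplus(\limsup_\lambda\mathcal B)$ and $(\liminf_\lambda\mathcal A)\boxplus(\liminf_\lambda\mathcal B)\subseteq\liminf_{\alpha\to\lambda}(\mathcal A(\alpha)\boxplus\mathcal B(\alpha))$; (b) the same two inclusions hold with $\boxtimes$ in place of $\boxplus$; (c) $\limsup_{\alpha\to\lambda}\mathcal A(\alpha)^\mu\subseteq(\limsup_\lambda\mathcal A)^\mu$ and $(\liminf_\lambda\mathcal A)^\mu\subseteq\liminf_{\alpha\to\lambda}\mathcal A(\alpha)^\mu$; (d) $\limsup_{\alpha\to\lambda}\mathcal A(\alpha)^\nu\subseteq(\limsup_\lambda\mathcal A)^\nu$ and $(\liminf_\lambda\mathcal A)^\nu\subseteq\liminf_{\alpha\to\lambda}\mathcal A(\alpha)^\nu$.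
   Context: $\mathcal O$ is the set of ordinals $\le\top_{\mathsf{ord}}$ for a fixed ordinal $\top_{\mathsf{ord}}$ ($=\beth_\omega$). For $f:\mathcal O\to\mathfrak L$ into a complete lattice and a nonzero limit $\lambda\in\mathcal O$: $\liminf_{\alpha\to\lambda}f(\alpha)=\sup_{\alpha_0<\lambda}\inf_{\alpha_0\le\alpha<\lambda}f(\alpha)$, $\limsup_{\alpha\to\lambda}f(\alpha)=\inf_{\alpha_0<\lambda}\sup_{\alpha_0\le\alpha<\lambda}f(\alpha)$. Terms: $r,s,t::=c\mid x\mid\lambda x\,t\mid r\,s$, with constants $c::=\langle\rangle\mid\mathsf{pair}\mid\mathsf{fst}\mid\mathsf{snd}\mid\mathsf{inl}\mid\mathsf{inr}\mid\mathsf{case}\mid\mathsf{in}\mid\mathsf{out}\mid\mathsf{fix}^\mu_n\mid\mathsf{fix}^\nu_n$ ($n\in\mathbb N$); $t_{1..n}$ abbreviates $t_1\dots t_n$. Evaluation frames: $e(\_)::=\_\,s\mid\mathsf{fst}\,\_\mid\mathsf{snd}\,\_\mid\mathsf{case}\,\_\mid\mathsf{out}\,\_\mid\mathsf{fix}^\mu_n\,s\,t_{1..n}\,\_$; evaluation contexts $E$ are finite (possibly empty) compositions of frames. Reduction $\longrightarrow$ is the closure under all term constructs of: $(\lambda x t)s\to[s/x]t$; $\mathsf{fst}(\mathsf{pair}\,r\,s)\to r$; $\mathsf{snd}(\mathsf{pair}\,r\,s)\to s$; $\mathsf{case}(\mathsf{inl}\,r)\to\lambda x\lambda y.x\,r$;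 $\mathsf{case}(\mathsf{inr}\,r)\to\lambda x\lambda y.y\,r$ ($x,y\notin FV(r)$); $\mathsf{out}(\mathsf{in}\,r)\to r$; $\mathsf{fix}^\mu_n\,s\,t_{1..n}(\mathsf{in}\,t)\to s(\mathsf{fix}^\mu_n s)t_{1..n}(\mathsf{in}\,t)$; $\mathsf{out}(\mathsf{fix}^\nu_n s\,t_{1..n})\to\mathsf{out}(s(\mathsf{fix}^\nu_n s)t_{1..n})$. $\mathsf S$ = strongly normalizing terms. Safe reduction $\rhd$ is the least relation closed under evaluation contexts and transitivity containing: $(\lambda x t)s\rhd[s/x]t$ if $s\in\mathsf S$; $\mathsf{fst}(\mathsf{pair}\,r\,s)\rhd r$ if $s\in\mathsf S$; $\mathsf{snd}(\mathsf{pair}\,r\,s)\rhd s$ if $r\in\mathsf S$; $\mathsf{out}(\mathsf{in}\,r)\rhd r$; $\mathsf{case}(\mathsf{inl}\,r)\rhd\lambda x\lambda y.x\,r$; $\mathsf{case}(\mathsf{inr}\,r)\rhd\lambda x\lambda y.y\,r$; $\mathsf{fix}^\mu_n s\,t_{1..n}(\mathsf{in}\,r)\rhd s(\mathsf{fix}^\mu_n s)t_{1..n}(\mathsf{in}\,r)$; $\mathsf{out}(\mathsf{fix}^\nu_n s\,t_{1..n})\rhd\mathsf{out}(s(\mathsf{fix}^\nu_n s)t_{1..n})$. For a term set $\mathcal A$: ${}^{\rhd}\mathcal A=\{t\mid t\in\mathcal A\text{ or }t\rhd t'\in\mathcal A\}$; closure $\overline{\mathcal A}={}^{\rhd}(\mathcal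 A\cup\{E(x)\mid x\text{ variable},E(x)\in\mathsf S\})$; $\mathcal N:=\overline{\emptyset}$. A set $\mathcal A$ is saturated if $\overline{\mathcal A}=\mathcal A$ and $\mathcal N\subseteq\mathcal A\subseteq\mathsf S$; $\mathrm{SAT}$ is the complete lattice of saturated sets ordered by $\subseteq$, with bottom $\mathcal N$, top $\mathsf S$, and infima/suprema of nonempty families given by intersection/union. Operations: $r\cdot\mathcal A=\{r\,s\mid s\in\mathcal A\}$, $e^{-1}\mathcal A=\{r\mid e(r)\in\mathcal A\}$; $\mathcal A\boxplus\mathcal B=\overline{\mathsf{inl}\cdot\mathcal A}\cup\overline{\mathsf{inr}\cdot\mathcal B}$; $\mathcal A\boxtimes\mathcal B=(\mathsf{fst}\,\_)^{-1}\mathcal A\cap(\mathsf{snd}\,\_)^{-1}\mathcal B$; $\mathcal A^\mu=\overline{\mathsf{in}\cdot\mathcal A}$; $\mathcal A^\nu=(\mathsf{out}\,\_)^{-1}\mathcal A$. *)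

(* Defs.v *)
From Stdlib Require Import Arith List.
Import ListNotations.

Inductive const : Type :=
| CUnit | CPair | CFst | CSnd | CInl | CInr | CCase | CIn | COut
| CFixMu (n : nat) | CFixNu (n : nat).

Inductive tm : Type :=
| Con (c : const)
| Var (n : nat)
| Lam (t : tm)
| App (r s : tm).

Fixpoint lift (d k : nat) (t : tm) : tm :=
  match t with
  | Con c => Con c
  | Var n => if Nat.leb k n then Var (n + d) else Var n
  | Lam t => Lam (lift d (S k) t)
  | App r s => App (lift d k r) (lift d k s)
  end.

Fixpoint subst (s : tm) (k : nat) (t : tm) : tm :=
  match t with
  | Con c => Con c
  | Var n => if Nat.eqb n k then lift k 0 s
             else if Nat.ltb k n then Var (pred n) else Var n
  | Lam t => Lam (subst s (S k) t)
  | App r1 r2 => App (subst s k r1) (subst s k r2)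
  end.

Fixpoint apps (h : tm) (l : list tm) : tm :=
  match l with
  | [] => h
  | x :: l => apps (App h x) l
  end.

(* case (inl r) -> \x\y. x r  and  case (inr r) -> \x\y. y r *)
Definition case_inl_red (r : tm) : tm := Lam (Lam (App (Var 1) (lift 2 0 r))).
Definition case_inr_red (r : tm) : tm := Lam (Lam (App (Var 0) (lift 2 0 r))).

Inductive contr : tm -> tm -> Prop :=
| contr_beta t s : contr (App (Lam t) s) (subst s 0 t)
| contr_fst r s : contr (App (Con CFst) (App (App (Con CPair) r) s)) r
| contr_snd r s : contr (App (Con CSnd) (App (App (Con CPair) r) s)) s
| contr_case_inl r : contr (App (Con CCase) (App (Con CInl) r)) (case_inl_red r)
| contr_case_inr r : contr (App (Con CCase) (App (Con CInr) r)) (case_inr_red r)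
| contr_out_in r : contr (App (Con COut) (App (Con CIn) r)) r
| contr_fixmu n s ts t : length ts = n ->
    contr (App (apps (App (Con (CFixMu n)) s) ts) (App (Con CIn) t))
          (App (apps (App s (App (Con (CFixMu n)) s)) ts) (App (Con CIn) t))
| contr_fixnu n s ts : length ts = n ->
    contr (App (Con COut) (apps (App (Con (CFixNu n)) s) ts))
          (App (Con COut) (apps (App s (App (Con (CFixNu n)) s)) ts)).

Inductive step : tm -> tm -> Prop :=
| step_contr t u : contr t u -> step t u
| step_lam t u : step t u -> step (Lam t) (Lam u)
| step_appl r r' s : step r r' -> step (App r s) (App r' s)
| step_appr r s s' : step s s' -> step (App r s) (App r s').

Definition SN (t : tm) : Prop := Acc (fun u v => step v u) t.

Inductive frame : (tm -> tm) -> Prop :=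
| fr_app s : frame (fun t => App t s)
| fr_fst : frame (fun t => App (Con CFst) t)
| fr_snd : frame (fun t => App (Con CSnd) t)
| fr_case : frame (fun t => App (Con CCase) t)
| fr_out : frame (fun t => App (Con COut) t)
| fr_fix n s ts : length ts = n ->
    frame (fun t => App (apps (App (Con (CFixMu n)) s) ts) t).

Inductive ectx : (tm -> tm) -> Prop :=
| ectx_hole : ectx (fun t => t)
| ectx_frame E e : ectx E -> frame e -> ectx (fun t => e (E t)).

Inductive safe_base : tm -> tm -> Prop :=
| sb_beta t s : SN s -> safe_base (App (Lam t) s) (subst s 0 t)
| sb_fst r s : SN s -> safe_base (App (Con CFst) (App (App (Con CPair) r) s)) r
| sb_snd r s : SN r -> safe_base (App (Con CSnd) (App (App (Con CPair) r) s)) s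
| sb_out_in r : safe_base (App (Con COut) (App (Con CIn) r)) r
| sb_case_inl r : safe_base (App (Con CCase) (App (Con CInl) r)) (case_inl_red r)
| sb_case_inr r : safe_base (App (Con CCase) (App (Con CInr) r)) (case_inr_red r)
| sb_fixmu n s ts r : length ts = n ->
    safe_base (App (apps (App (Con (CFixMu n)) s) ts) (App (Con CIn) r))
              (App (apps (App s (App (Con (CFixMu n)) s)) ts) (App (Con CIn) r))
| sb_fixnu n s ts : length ts = n ->
    safe_base (App (Con COut) (apps (App (Con (CFixNu n)) s) ts))
              (App (Con COut) (apps (App s (App (Con (CFixNu n)) s)) ts)).

Inductive safe : tm -> tm -> Prop :=
| safe_b t u : safe_base t u -> safe t u
| safe_ctx E t u : ectx E -> safe t u -> safe (E t) (E u)
| safe_trans t u v : safe t u -> safe u v -> safe t v.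

Definition tset := tm -> Prop.

Definition subset (A B : tset) : Prop := forall t, A t -> B t.

Definition pre_safe (A : tset) : tset :=
  fun t => A t \/ exists t', safe t t' /\ A t'.

Definition closure (A : tset) : tset :=
  pre_safe (fun t => A t \/
    exists E x, ectx E /\ t = E (Var x) /\ SN (E (Var x))).

Definition Nset : tset := closure (fun _ => False).

Definition saturated (A : tset) : Prop :=
  (forall t, closure A t <-> A t) /\ subset Nset A /\ subset A SN.

Definition cdot (r : tm) (A : tset) : tset := fun t => exists s, A s /\ t = App r s.
Definition preim (e : tm -> tm) (A : tset) : tset := fun r => A (e r).

Definition boxplus (A B : tset) : tset :=
  fun t => closure (cdot (Con CInl) A) t \/ closure (cdot (Con CInr) B) t.
Definition boxtimes (A B : tset) : tset :=
  fun t => preim (fun r => App (Con CFst) r) A t /\ preim (fun r => App (Con CSnd) r) B t.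
Definition mu_op (A : tset) : tset := closure (cdot (Con CIn) A).
Definition nu_op (A : tset) : tset := preim (fun r => App (Con COut) r) A.

(* Ordinals: an abstract well-ordered type (strict order lt). *)
Definition is_wellorder {O : Type} (lt : O -> O -> Prop) : Prop :=
  well_founded lt /\
  (forall a b c, lt a b -> lt b c -> lt a c) /\
  (forall a b, lt a b \/ a = b \/ lt b a).

Definition nonzero_limit {O : Type} (lt : O -> O -> Prop) (lam : O) : Prop :=
  (exists a, lt a lam) /\ (forall a, lt a lam -> exists b, lt a b /\ lt b lam).

(* liminf / limsup in SAT: sup/inf of nonempty families are union/intersection *)
Definition liminf {O : Type} (lt : O -> O -> Prop) (lam : O) (A : O -> tset) : tset :=
  fun t => exists a0, lt a0 lam /\
    forall a, (lt a0 a \/ a0 = a) -> lt a lam -> A a t.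

Definition limsup {O : Type} (lt : O -> O -> Prop) (lam : O) (A : O -> tset) : tset :=
  fun t => forall a0, lt a0 lam ->
    exists a, (lt a0 a \/ a0 = a) /\ lt a lam /\ A a t.

(* Main.v *)
Require Import Defs.
From Stdlib Require Import Arith List Lia Relations Classical.
Import ListNotations.

Fixpoint spine (t : tm) : tm * list tm :=
  match t with
  | App r s => (fst (spine r), snd (spine r) ++ [s])
  | _ => (t, [])
  end.

Lemma apps_app h l x : apps h (l ++ [x]) = App (apps h l) x.
Proof. revert h; induction l; simpl; auto. Qed.

Lemma apps_App a b l : exists r1 r2, apps (App a b) l = App r1 r2.
Proof. revert a b; induction l as [|x l IH]; intros a b; simpl; eauto. Qed.

Lemma spine_apps h l : spine (apps h l) = (fst (spine h), snd (spine h) ++ l).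
Proof. revert h; induction l as [|x l IH]; intro h; simpl.
 - rewrite app_nil_r; destruct (spine h); reflexivity.
 - rewrite IH. simpl. rewrite <- app_assoc. reflexivity. Qed.

Lemma spine_ok t : apps (fst (spine t)) (snd (spine t)) = t.
Proof. induction t; simpl; auto. rewrite apps_app, IHt1. reflexivity. Qed.

Definition fixmu_view (t : tm) : option (nat * tm * list tm) :=
  match spine t with
  | (Con (CFixMu n), s0 :: ts) => if Nat.eqb (length ts) n then Some (n, s0, ts) else None
  | _ => None end.
Definition fixnu_view (t : tm) : option (nat * tm * list tm) :=
  match spine t with
  | (Con (CFixNu n), s0 :: ts) => if Nat.eqb (length ts) n then Some (n, s0, ts) else None
  | _ => None end.

Lemma fixmu_view_Some t n s0 ts : fixmu_view t = Some (n,s0,ts) ->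
  t = apps (App (Con (CFixMu n)) s0) ts /\ length ts = n.
Proof. unfold fixmu_view. intro H. rewrite <- (spine_ok t). destruct (spine t) as [h l]. simpl.
 destruct h; try discriminate. destruct c; try discriminate. destruct l as [|x l]; try discriminate.
 destruct (Nat.eqb_spec (length l) n0); try discriminate. inversion H; subst. simpl; auto. Qed.

Lemma fixnu_view_Some t n s0 ts : fixnu_view t = Some (n,s0,ts) ->
  t = apps (App (Con (CFixNu n)) s0) ts /\ length ts = n.
Proof. unfold fixnu_view. intro H. rewrite <- (spine_ok t). destruct (spine t) as [h l]. simpl.
 destruct h; try discriminate. destruct c; try discriminate. destruct l as [|x l]; try discriminate.
 destruct (Nat.eqb_spec (length l) n0); try discriminate. inversion H; subst. simpl; auto. Qed.

Lemma fixmu_view_apps c s0 l : fixmu_view (apps (App (Con c) s0) l) =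
  match c with CFixMu n => if Nat.eqb (length l) n then Some (n,s0,l) else None | _ => None end.
Proof. unfold fixmu_view. rewrite spine_apps. simpl. destruct c; reflexivity. Qed.

Lemma fixnu_view_apps n s0 l : length l = n -> fixnu_view (apps (App (Con (CFixNu n)) s0) l) = Some (n,s0,l).
Proof. intro; subst. unfold fixnu_view. rewrite spine_apps. simpl. rewrite Nat.eqb_refl. reflexivity. Qed.

Lemma fixmu_view_Con c : fixmu_view (Con c) = None.
Proof. destruct c; reflexivity. Qed.

Definition in_view t := match t with App (Con CIn) a => Some a | _ => None end.
Definition inl_view t := match t with App (Con CInl) a => Some a | _ => None end.
Definition inr_view t := match t with App (Con CInr) a => Some a | _ => None end.
Definition pair_view t := match t with App (App (Con CPair) a) b => Some (a, b) | _ => None end.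

Ltac view_tac := let t := fresh in intros t; intros;
  destruct t as [c0|n0|b0|t1 t2]; try discriminate; destruct t1; try discriminate;
  match goal with c : const |- _ => destruct c end; try discriminate; simpl in *; congruence.

Lemma in_view_Some t a : in_view t = Some a -> t = App (Con CIn) a. Proof. revert t. view_tac. Qed.
Lemma inl_view_Some t a : inl_view t = Some a -> t = App (Con CInl) a. Proof. revert t. view_tac. Qed.
Lemma inr_view_Some t a : inr_view t = Some a -> t = App (Con CInr) a. Proof. revert t. view_tac. Qed.
Lemma pair_view_Some t a b : pair_view t = Some (a,b) -> t = App (App (Con CPair) a) b.
Proof. destruct t as [c0|n0|b0|t1 t2]; try discriminate. destruct t1 as [c1|n1|b1|u v]; try discriminate.
  destruct u; try discriminate. destruct c; try discriminate. simpl. congruence. Qed.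

Definition hstep_app (hr hs : option tm) (r s : tm) : option tm :=
 match fixmu_view r with
 | Some (n, s0, ts) => match in_view s with
     | Some _ => Some (App (apps (App s0 (App (Con (CFixMu n)) s0)) ts) s)
     | None => option_map (App r) hs end
 | None => match r with
   | Lam b => Some (subst s 0 b)
   | Con CFst => match pair_view s with Some (a,b) => Some a | None => option_map (App r) hs end
   | Con CSnd => match pair_view s with Some (a,b) => Some b | None => option_map (App r) hs end
   | Con CCase => match inl_view s with Some a => Some (case_inl_red a)
                  | None => match inr_view s with Some a => Some (case_inr_red a)
                            | None => option_map (App r) hs end end
   | Con COut => match fixnu_view s with
       | Some (n, s0, ts) => Some (App (Con COut) (apps (App s0 (App (Con (CFixNu n)) s0)) ts))
       | None => match in_view s with Some a => Some a | None => option_map (App r) hs end end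
   | Con _ => None
   | Var _ => None
   | App _ _ => option_map (fun r' => App r' s) hr
   end end.

Fixpoint hstep (t : tm) : option tm :=
  match t with App r s => hstep_app (hstep r) (hstep s) r s | _ => None end.

Lemma hstep_App r s : hstep (App r s) = hstep_app (hstep r) (hstep s) r s.
Proof. reflexivity. Qed.

Definition inert c := match c with CFst|CSnd|CCase|COut|CFixMu _ => False | _ => True end.

Lemma inert_none c s0 ts : inert c -> hstep (apps (App (Con c) s0) ts) = None.
Proof. intro Hc. induction ts as [|x l IH] using rev_ind.
 - cbn [apps]. rewrite hstep_App. unfold hstep_app. rewrite fixmu_view_Con.
   destruct c; simpl in Hc; try contradiction; reflexivity.
 - rewrite apps_app, hstep_App, IH. unfold hstep_app. rewrite fixmu_view_apps.
   destruct (apps_App (Con c) s0 l) as [r1 [r2 E]].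
   destruct c; simpl in Hc; try contradiction; rewrite E; reflexivity.
Qed.

Lemma val_none c s : inert c -> hstep (App (Con c) s) = None.
Proof. exact (fun H => inert_none c s [] H). Qed.

Lemma fixmu_none n s0 ts : length ts <= n -> hstep (apps (App (Con (CFixMu n)) s0) ts) = None.
Proof. induction ts as [|x l IH] using rev_ind; intro Hl.
 - cbn [apps]. rewrite hstep_App. unfold hstep_app. rewrite fixmu_view_Con. reflexivity.
 - rewrite length_app in Hl; simpl in Hl.
   rewrite apps_app, hstep_App, IH by lia. unfold hstep_app. rewrite fixmu_view_apps.
   destruct (Nat.eqb_spec (length l) n); [lia|].
   destruct (apps_App (Con (CFixMu n)) s0 l) as [r1 [r2 E]]. rewrite E. reflexivity.
Qed.

Lemma base_step r r' : safe_base r r' -> hstep r = Some r'.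
Proof. destruct 1; try reflexivity.
 - rewrite hstep_App. unfold hstep_app. rewrite fixmu_view_apps. subst. rewrite Nat.eqb_refl. reflexivity.
 - rewrite hstep_App. unfold hstep_app. rewrite fixmu_view_Con. rewrite fixnu_view_apps by auto. reflexivity.
Qed.

Lemma frame_step e t t' : frame e -> hstep t = Some t' -> hstep (e t) = Some (e t').
Proof. destruct 1; intro Ht; cbv beta; rewrite hstep_App; unfold hstep_app.
 - destruct (fixmu_view t) as [[[n s0] ts]|] eqn:Ev.
   + apply fixmu_view_Some in Ev as [-> Hl]. rewrite fixmu_none in Ht by lia; discriminate.
   + destruct t; try (simpl in Ht; discriminate). rewrite Ht. reflexivity.
 - rewrite fixmu_view_Con. destruct (pair_view t) as [[a b]|] eqn:Ep.
   + apply pair_view_Some in Ep; subst. assert (Hn: hstep (App (App (Con CPair) a) b) = None) by exact (inert_none CPair a [b] I); congruence.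
   + rewrite Ht; reflexivity.
 - rewrite fixmu_view_Con. destruct (pair_view t) as [[a b]|] eqn:Ep.
   + apply pair_view_Some in Ep; subst. assert (Hn: hstep (App (App (Con CPair) a) b) = None) by exact (inert_none CPair a [b] I); congruence.
   + rewrite Ht; reflexivity.
 - rewrite fixmu_view_Con. destruct (inl_view t) as [a|] eqn:Ep.
   + apply inl_view_Some in Ep; subst. rewrite (val_none CInl a I) in Ht; discriminate.
   + destruct (inr_view t) as [a|] eqn:Eq.
     * apply inr_view_Some in Eq; subst. rewrite (val_none CInr a I) in Ht; discriminate.
     * rewrite Ht; reflexivity.
 - rewrite fixmu_view_Con. destruct (fixnu_view t) as [[[n s0] ts]|] eqn:Ev.
   + apply fixnu_view_Some in Ev as [-> Hl]. rewrite (inert_none (CFixNu n)) in Ht by exact I; discriminate.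
   + destruct (in_view t) as [a|] eqn:Ep.
     * apply in_view_Some in Ep; subst. rewrite (val_none CIn a I) in Ht; discriminate.
     * rewrite Ht; reflexivity.
 - rewrite fixmu_view_apps. subst n. rewrite Nat.eqb_refl.
   destruct (in_view t) as [a|] eqn:Ep.
   + apply in_view_Some in Ep; subst. rewrite (val_none CIn a I) in Ht; discriminate.
   + rewrite Ht; reflexivity.
Qed.

Lemma ectx_step E t t' : ectx E -> hstep t = Some t' -> hstep (E t) = Some (E t').
Proof. induction 1; intro H'; cbv beta; auto. apply frame_step; auto. Qed.

Definition R t u := hstep t = Some u.

Lemma safe_ct t u : safe t u -> clos_trans tm R t u.
Proof. induction 1.
 - apply t_step. apply base_step; auto.
 - clear H0. induction IHsafe. apply t_step. apply ectx_step; auto. eapply t_trans; eauto.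
 - eapply t_trans; eauto.
Qed.

Lemma noclos t u : hstep t = None -> clos_trans tm R t u -> False.
Proof. intros H Hc. apply clos_trans_t1n_iff in Hc. destruct Hc as [y Hy|y z Hy _]; unfold R in Hy; congruence. Qed.

Lemma uniq_ct t w1 w2 : clos_trans tm R t w1 -> clos_trans tm R t w2 ->
  hstep w1 = None -> hstep w2 = None -> w1 = w2.
Proof. intros H1 H2 N1 N2. apply clos_trans_t1n_iff in H1. apply clos_trans_t1n_iff in H2. revert w2 H2 N2.
 induction H1 as [x y Hy|x y z Hy Hyz IH]; intros w2 H2 N2;
 destruct H2 as [y' Hy'|y' z' Hy' Hyz']; unfold R in *.
 - congruence.
 - assert (y = y') by congruence. subst. exfalso. apply (noclos y' z'); auto. apply clos_trans_t1n_iff; auto.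
 - assert (y = y') by congruence. subst. exfalso. apply (noclos y' z); auto. apply clos_trans_t1n_iff; auto.
 - assert (y = y') by congruence. subst. apply IH; auto.
Qed.

Definition reaches t v := t = v \/ safe t v.

Lemma reaches_unique t v1 v2 : reaches t v1 -> reaches t v2 -> hstep v1 = None -> hstep v2 = None -> v1 = v2.
Proof. intros [->|H1] [E|H2] N1 N2; auto.
 - subst. exfalso. apply (noclos v1 v2 N1). apply safe_ct; auto.
 - subst. exfalso. apply (noclos v2 v1 N2). apply safe_ct; auto.
 - apply (uniq_ct t); auto; apply safe_ct; auto.
Qed.

Definition neu t := exists E x, ectx E /\ t = E (Var x) /\ SN (E (Var x)).
Definition Neu t := neu t \/ exists t', safe t t' /\ neu t'.

Lemma Neu_closure X t : Neu t -> closure X t.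
Proof. unfold closure, pre_safe. intros [H|[t' [Hs H]]]. left; right; exact H. right; exists t'; split; auto; right; exact H. Qed.

Lemma closure_cdot c A t : closure (cdot c A) t -> Neu t \/ exists s, A s /\ reaches t (App c s).
Proof. unfold closure, pre_safe, cdot.
 intros [[[s [Hs ->]]|Hn]|[t' [Hst [[s [Hs ->]]|Hn]]]].
 - right; exists s; split; auto; left; auto.
 - left; left; exact Hn.
 - right; exists s; split; auto; right; auto.
 - left; right; exists t'; auto.
Qed.

Lemma cdot_closure c A t s : A s -> reaches t (App c s) -> closure (cdot c A) t.
Proof. intros Hs [->|H]. left; left; exists s; auto. right; exists (App c s); split; auto; left; exists s; auto. Qed.

Lemma runiq t c1 c2 s1 s2 : inert c1 -> inert c2 -> reaches t (App (Con c1) s1) -> reaches t (App (Con c2) s2) ->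
  c1 = c2 /\ s1 = s2.
Proof. intros I1 I2 H1 H2. pose proof (reaches_unique t _ _ H1 H2 (val_none c1 s1 I1) (val_none c2 s2 I2)) as E.
 injection E; auto. Qed.

Section Lim.
Variables (O : Type) (lt : O -> O -> Prop) (Hwo : is_wellorder lt)
  (lam : O) (Hlam : nonzero_limit lt lam).

Lemma a1 (A B : O -> tset) t : limsup lt lam (fun a => boxplus (A a) (B a)) t ->
  boxplus (limsup lt lam A) (limsup lt lam B) t.
Proof.
 intro H. destruct (classic (Neu t)) as [Hn|Hn]. { left. apply Neu_closure; auto. }
 destruct Hlam as [[a0 Ha0] _].
 destruct (H a0 Ha0) as [a [_ [_ [Hp|Hp]]]]; apply closure_cdot in Hp as [Hp|[s [Hs Hr]]]; try contradiction.
 - left. apply cdot_closure with s; auto. intros b0 Hb0.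
   destruct (H b0 Hb0) as [b [Hb1 [Hb2 [Hq|Hq]]]]; apply closure_cdot in Hq as [Hq|[s' [Hs' Hr']]]; try contradiction.
   + exists b; repeat split; auto. destruct (runiq t CInl CInl s s' I I Hr Hr') as [_ ->]; auto.
   + destruct (runiq t CInl CInr s s' I I Hr Hr') as [E _]; discriminate.
 - right. apply cdot_closure with s; auto. intros b0 Hb0.
   destruct (H b0 Hb0) as [b [Hb1 [Hb2 [Hq|Hq]]]]; apply closure_cdot in Hq as [Hq|[s' [Hs' Hr']]]; try contradiction.
   + destruct (runiq t CInr CInl s s' I I Hr Hr') as [E _]; discriminate.
   + exists b; repeat split; auto. destruct (runiq t CInr CInr s s' I I Hr Hr') as [_ ->]; auto.
Qed.

Lemma a2 (A B : O -> tset) t : boxplus (liminf lt lam A) (liminf lt lam B) t ->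
  liminf lt lam (fun a => boxplus (A a) (B a)) t.
Proof.
 intros [Hp|Hp]; apply closure_cdot in Hp as [Hn|[s [[a0 [Ha0 Hs]] Hr]]].
 - destruct Hlam as [[a0 Ha0] _]; exists a0; split; auto; intros; left; apply Neu_closure; auto.
 - exists a0; split; auto; intros a Ha1 Ha2; left; apply cdot_closure with s; auto.
 - destruct Hlam as [[a0 Ha0] _]; exists a0; split; auto; intros; right; apply Neu_closure; auto.
 - exists a0; split; auto; intros a Ha1 Ha2; right; apply cdot_closure with s; auto.
Qed.

Lemma c1 (A : O -> tset) t : limsup lt lam (fun a => mu_op (A a)) t -> mu_op (limsup lt lam A) t.
Proof.
 intro H. destruct (classic (Neu t)) as [Hn|Hn]. { apply Neu_closure; auto. }
 destruct Hlam as [[a0 Ha0] _].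
 destruct (H a0 Ha0) as [a [_ [_ Hp]]]; apply closure_cdot in Hp as [Hp|[s [Hs Hr]]]; try contradiction.
 apply cdot_closure with s; auto. intros b0 Hb0.
 destruct (H b0 Hb0) as [b [Hb1 [Hb2 Hq]]]; apply closure_cdot in Hq as [Hq|[s' [Hs' Hr']]]; try contradiction.
 exists b; repeat split; auto. destruct (runiq t CIn CIn s s' I I Hr Hr') as [_ ->]; auto.
Qed.

Lemma c2 (A : O -> tset) t : mu_op (liminf lt lam A) t -> liminf lt lam (fun a => mu_op (A a)) t.
Proof.
 intro Hp; apply closure_cdot in Hp as [Hn|[s [[a0 [Ha0 Hs]] Hr]]].
 - destruct Hlam as [[a0 Ha0] _]; exists a0; split; auto; intros; apply Neu_closure; auto.
 - exists a0; split; auto; intros a Ha1 Ha2; apply cdot_closure with s; auto.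
Qed.

Lemma b1 (A B : O -> tset) t : limsup lt lam (fun a => boxtimes (A a) (B a)) t ->
  boxtimes (limsup lt lam A) (limsup lt lam B) t.
Proof. unfold limsup, boxtimes, preim. intro H. split; intros a0 Ha0;
 destruct (H a0 Ha0) as [a [? [? [? ?]]]]; exists a; auto. Qed.

Lemma max_ex a0 b0 : exists m, (lt a0 m \/ a0 = m) /\ (lt b0 m \/ b0 = m) /\ (m = a0 \/ m = b0).
Proof. destruct Hwo as [_ [_ Htri]]. destruct (Htri a0 b0) as [H|[H|H]].
 - exists b0; auto. - exists a0; subst; auto. - exists a0; auto. Qed.

Lemma ge_trans a0 m a : (lt a0 m \/ a0 = m) -> (lt m a \/ m = a) -> (lt a0 a \/ a0 = a).
Proof. destruct Hwo as [_ [Htr _]]. intros [H|H] [H'|H']; subst; eauto. Qed.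

Lemma b2 (A B : O -> tset) t : boxtimes (liminf lt lam A) (liminf lt lam B) t ->
  liminf lt lam (fun a => boxtimes (A a) (B a)) t.
Proof. unfold liminf, boxtimes, preim. intros [[a0 [Ha0 HA]] [b0 [Hb0 HB]]].
 destruct (max_ex a0 b0) as [m [Hm1 [Hm2 Hm3]]]. exists m. split.
 - destruct Hm3; subst; auto.
 - intros a Ha Hal. split. apply HA; auto. eapply ge_trans; eauto. apply HB; auto. eapply ge_trans; eauto.
Qed.

Lemma d1 (A : O -> tset) t : limsup lt lam (fun a => nu_op (A a)) t -> nu_op (limsup lt lam A) t.
Proof. unfold limsup, nu_op, preim. intros H a0 Ha0. destruct (H a0 Ha0) as [a ?]; exists a; auto. Qed.

Lemma d2 (A : O -> tset) t : nu_op (liminf lt lam A) t -> liminf lt lam (fun a => nu_op (A a)) t.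
Proof. unfold liminf, nu_op, preim. auto. Qed.
End Lim.

Theorem lemma4p6 (O : Type) (lt : O -> O -> Prop) (Hwo : is_wellorder lt)
  (lam : O) (Hlam : nonzero_limit lt lam)
  (A B : O -> tset) (HA : forall a, saturated (A a)) (HB : forall a, saturated (B a)) :
  (subset (limsup lt lam (fun a => boxplus (A a) (B a)))
          (boxplus (limsup lt lam A) (limsup lt lam B)) /\
   subset (boxplus (liminf lt lam A) (liminf lt lam B))
          (liminf lt lam (fun a => boxplus (A a) (B a)))) /\
  (subset (limsup lt lam (fun a => boxtimes (A a) (B a)))
          (boxtimes (limsup lt lam A) (limsup lt lam B)) /\
   subset (boxtimes (liminf lt lam A) (liminf lt lam B))
          (liminf lt lam (fun a => boxtimes (A a) (B a)))) /\
  (subset (limsup lt lam (fun a => mu_op (A a))) (mu_op (limsup lt lam A)) /\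
   subset (mu_op (liminf lt lam A)) (liminf lt lam (fun a => mu_op (A a)))) /\
  (subset (limsup lt lam (fun a => nu_op (A a))) (nu_op (limsup lt lam A)) /\
   subset (nu_op (liminf lt lam A)) (liminf lt lam (fun a => nu_op (A a)))).
Proof.
 refine (conj (conj _ _) (conj (conj _ _) (conj (conj _ _) (conj _ _)))); intro x0.
 - apply a1; auto. - apply a2; auto. - apply b1. - apply b2; auto.
 - apply c1; auto. - apply c2; auto. - apply d1. - apply d2.
Qed.
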